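(* Let $n=2m+1\ge 3$ be odd and consider the configuration of $n$ lighthouses with center point light sources described in the context. Then the dark region behind the target lighthouse $L_0$ is finite, and it is bounded by the arc of $L_0$ facing away from $P$ together with the two rays emitted from the centers of the two lighthouses furthest from $L_0$, namely $L_m$ and $L_{m+1}$, that are tangent to $L_0$ on its far side (these two rays meet on the line through $P$ and the center of $L_0$). No other lighthouse $L_i$ ($i\ne 0,m,m+1$) contributes to bounding this dark region.
   Context: Setup (''lighthouse problem with center point light sources''): fix an integer $n\ge 1$ and a point $P$ (the placement center). There are $n$ lighthouses $L_0,L_1,\dots,L_{n-1}$, each an opaque closed disk of radius $1$; the center of $L_k$ is at distance $n$ from $P$, at polar angle $2\pi k/n$ around $P$ (so $L_0$'s center $C$ lies $n$ units to the right of $P$, and the lighthouses are numbered counter-clockwise). The illumination angle is $\alpha=2\pi/n$. Each lighthouse has a single point light source at its center, emitting light along straight rays within the angular sector of total angle $\alpha$ symmetric about the direction from its center toward $P$ (for $n=1$ this means all directions). Light is blocked by the lighthouse disks. A point outside all disks is dark if no such ray reaches it. By symmetry every lighthouse has a congruent dark region behind it (on the side away from $P$); $d(n)$ denotes the area of the dark region behind one lighthouse and $D(n)=n\cdot d(n)$ is the total dark area. *)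

(* Defs.v *)
From Stdlib Require Import Reals Lra.
Open Scope R_scope.

(* Points of the plane; the placement center P is the origin (0,0). *)
Definition pt := (R * R)%type.

Definition center (n k : nat) : pt :=
  (INR n * cos (2 * PI * INR k / INR n), INR n * sin (2 * PI * INR k / INR n)).

Definition in_disk (n k : nat) (q : pt) : Prop :=
  (fst q - fst (center n k))^2 + (snd q - snd (center n k))^2 <= 1.

Definition outside_all (n : nat) (q : pt) : Prop :=
  forall k, (k < n)%nat -> ~ in_disk n k q.

Definition seg_meets (n j : nat) (a b : pt) : Prop :=
  exists t, 0 <= t <= 1 /\
    in_disk n j (fst a + t * (fst b - fst a), snd a + t * (snd b - snd a)).

(* The direction from the center of L_k to q lies in the emission sector:
   total angle alpha = 2*pi/n, symmetric about the direction towards P,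
   i.e. the angle between q - c_k and P - c_k is at most pi/n. *)
Definition in_sector (n k : nat) (q : pt) : Prop :=
  let ux := fst q - fst (center n k) in
  let uy := snd q - snd (center n k) in
  let vx := - fst (center n k) in
  let vy := - snd (center n k) in
  ux * vx + uy * vy >=
    sqrt (ux^2 + uy^2) * sqrt (vx^2 + vy^2) * cos (PI / INR n).

(* q is reached by a ray of the point source at the center of L_k:
   q in the sector and the segment from the source to q meets no other
   lighthouse disk (the source's own disk does not block its light). *)
Definition lit_by (n k : nat) (q : pt) : Prop :=
  in_sector n k q /\
  forall j, (j < n)%nat -> j <> k -> ~ seg_meets n j (center n k) q.

Definition dark (n : nat) (q : pt) : Prop :=
  outside_all n q /\ forall k, (k < n)%nat -> ~ lit_by n k q.

(* The region bounded by the far arc of L_0 and the two rays from the centers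
   of L_m and L_(m+1) tangent to L_0 on its far side: the points outside all
   disks lying in the shadow of L_0 with respect to both sources c_m, c_(m+1). *)
Definition tangent_region (n m : nat) (q : pt) : Prop :=
  outside_all n q /\
  seg_meets n 0 (center n m) q /\
  seg_meets n 0 (center n (m + 1)) q.

(* Main.v *)
Require Import Defs.
From Stdlib Require Import Reals Lra Psatz Classical Lia.
Open Scope R_scope.

Lemma sin_lb_eq x : sin_lb x = x - x^3/6 + x^5/120 - x^7/5040.
Proof. unfold sin_lb, sin_approx. cbn [sum_f_R0]. unfold sin_term.
 rewrite !INR_IZR_INZ. cbn -[IZR pow]. field. Qed.

Lemma h_bounds (N : R) : 3 <= N -> 0 < PI / N /\ PI / N <= PI / 3 /\ N * (PI / N) = PI.
Proof.
  intros HN. pose proof PI_RGT_0. repeat split.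
  - apply Rdiv_lt_0_compat; lra.
  - unfold Rdiv. apply Rmult_le_compat_l; [lra|]. apply Rinv_le_contravar; lra.
  - field. lra.
Qed.

Lemma consts (N : R) : 3 <= N ->
  1/2 <= cos (PI/N) /\ 0 < sin (PI/N) /\ sin (PI/N) <= 1 /\
  sin (PI/N) ^ 2 + cos (PI/N) ^ 2 = 1 /\ 9/4 < N * sin (PI/N).
Proof.
  intros HN. destruct (h_bounds N HN) as [H0 [H1 H2]].
  pose proof PI_RGT_0 as HP. pose proof PI2_3_2. pose proof PI_4.
  set (h := PI / N) in *.
  assert (Hsc : sin h ^ 2 + cos h ^ 2 = 1).
  { pose proof (sin2_cos2 h) as E. unfold Rsqr in E. lra. }
  repeat split.
  - rewrite <- cos_PI3. apply cos_decr_1; lra.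
  - apply sin_gt_0; lra.
  - pose proof (SIN_bound h). lra.
  - exact Hsc.
  - destruct (SIN h) as [Hs _]; try lra. rewrite sin_lb_eq in Hs.
    set (p := PI) in *. clearbody h p. set (y := h*h).
    assert (Hy : y <= p*p/9).
    { unfold y. assert (h <= p/3) by lra. nra. }
    assert (Hy2 : y <= 16/9) by (unfold y; nra).
    assert (Hy0 : 0 <= y) by (unfold y; nra).
    assert (E : N * (h - h ^ 3 / 6 + h ^ 5 / 120 - h ^ 7 / 5040) =
                p * (1 - y/6 + y*y/120 - y*y*y/5040)).
    { rewrite <- H2. unfold y. field. }
    assert (N * sin h >= p * (1 - y/6 + y*y/120 - y*y*y/5040)) by nra.
    assert (y*y*y <= 6) by nra.
    assert (p * (1 - y/6 + y*y/120 - y*y*y/5040) >= p * (1 - p*p/54 - 6/5040)) by nra.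
    nra.
Qed.

Lemma consts5 (N : R) : 5 <= N -> 1 < N * sin (PI/N) * (2*cos (PI/N) - 1).
Proof.
  intros HN. assert (HN3 : 3 <= N) by lra. destruct (h_bounds N HN3) as [H0 [H1 H2]].
  pose proof PI_RGT_0 as HP. pose proof PI2_3_2. pose proof PI_4.
  destruct (consts N HN3) as [Hc [Hs0 [Hs1 [Hsc HNS]]]].
  set (h := PI / N) in *.
  assert (Hh5 : h <= PI/5).
  { unfold h, Rdiv. apply Rmult_le_compat_l; [lra|]. apply Rinv_le_contravar; lra. }
  assert (HC : 1 / sqrt 2 <= cos h).
  { rewrite <- cos_PI4. apply cos_decr_1; lra. }
  assert (HC2 : 7/10 < cos h).
  { pose proof (sqrt_sqrt 2) as E. pose proof (sqrt_lt_R0 2) as E2.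
    assert (cos h * sqrt 2 >= 1).
    { apply Rle_ge. apply (Rmult_le_reg_r (/ sqrt 2)). apply Rinv_0_lt_compat; lra.
      rewrite Rmult_assoc, Rinv_r by lra. lra. }
    nra. }
  destruct (SIN h) as [Hs _]; try lra. rewrite sin_lb_eq in Hs.
  set (p := PI) in *. clearbody h p. set (y := h*h).
  assert (Hy : y <= p*p/25).
  { unfold y. assert (h <= p/5) by lra. nra. }
  assert (Hy2 : y <= 1) by (unfold y; nra).
  assert (Hy0 : 0 <= y) by (unfold y; nra).
  assert (E : N * (h - h ^ 3 / 6 + h ^ 5 / 120 - h ^ 7 / 5040) =
              p * (1 - y/6 + y*y/120 - y*y*y/5040)).
  { rewrite <- H2. unfold y. field. }
  assert (N * sin h >= p * (1 - y/6 + y*y/120 - y*y*y/5040)) by nra.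
  assert (y*y*y <= 1) by nra.
  assert (p * (1 - y/6 + y*y/120 - y*y*y/5040) >= p * (1 - p*p/150 - 1/5040)) by nra.
  assert (N * sin h > 13/5) by nra.
  nra.
Qed.

Lemma sin_ge_interval a x : 0 <= a <= PI/2 -> a <= x <= PI - a -> sin a <= sin x.
Proof.
  intros Ha Hx. pose proof PI_RGT_0.
  destruct (Rle_dec x (PI/2)).
  - apply sin_incr_1; lra.
  - rewrite <- (sin_PI_x x). apply sin_incr_1; lra.
Qed.

Lemma sin_le_interval a x : 0 <= a <= PI/2 -> PI + a <= x <= 2*PI - a -> sin x <= - sin a.
Proof.
  intros Ha Hx.
  assert (E : sin x = - sin (x - PI)).
  { rewrite <- neg_sin. f_equal. ring. }
  rewrite E. apply Ropp_le_contravar. apply sin_ge_interval; lra.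
Qed.

Lemma center_eq n k : center n k =
  (INR n * cos (2 * INR k * (PI / INR n)), INR n * sin (2 * INR k * (PI / INR n))).
Proof. unfold center. f_equal; f_equal; f_equal; unfold Rdiv; ring. Qed.

Lemma INR_n n m : n = (2*m+1)%nat -> INR n = 2 * INR m + 1.
Proof. intros ->. rewrite plus_INR, mult_INR. simpl. ring. Qed.

Lemma center_m n m : n = (2*m+1)%nat ->
  center n m = (- (INR n * cos (PI / INR n)), INR n * sin (PI / INR n)).
Proof.
  intros Hn. rewrite center_eq. pose proof (INR_n n m Hn) as HN.
  pose proof (pos_INR m).
  assert (E : 2 * INR m * (PI / INR n) = PI - PI / INR n).
  { rewrite HN. field. lra. }
  rewrite E, sin_PI_x. f_equal. rewrite cos_minus, cos_PI, sin_PI. ring.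
Qed.

Lemma center_m1 n m : n = (2*m+1)%nat ->
  center n (m+1) = (- (INR n * cos (PI / INR n)), - (INR n * sin (PI / INR n))).
Proof.
  intros Hn. rewrite center_eq. pose proof (INR_n n m Hn) as HN.
  pose proof (pos_INR m). rewrite plus_INR. simpl INR.
  assert (E : 2 * (INR m + 1) * (PI / INR n) = PI / INR n + PI).
  { rewrite HN. field. lra. }
  rewrite E, neg_sin, neg_cos. f_equal; ring.
Qed.

Lemma center_0 n : center n 0 = (INR n, 0).
Proof.
  rewrite center_eq. simpl INR. replace (2 * 0 * (PI / INR n)) with 0 by ring.
  rewrite cos_0, sin_0. f_equal; ring.
Qed.

Section Geo.
Variables N C S : R.
Hypothesis HN : 3 <= N.
Hypothesis HC : 1/2 <= C.
Hypothesis HS0 : 0 < S.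
Hypothesis HS1 : S <= 1.
Hypothesis HSC : S^2 + C^2 = 1.
Hypothesis HNS : 9/4 < N * S.

Lemma sh_y qx qy t : 0 <= t <= 1 ->
  (-(N*C) + t*(qx - -(N*C)) - N)^2 + (N*S + t*(qy - N*S) - 0)^2 <= 1 -> qy <= 1.
Proof.
  intros Ht Hd. destruct (Rle_dec qy 1) as [|Hq]; [assumption|]. exfalso.
  apply Rnot_le_lt in Hq.
  assert (0 <= (1-t)*(N*S-1)) by nra. assert (0 <= t*(qy-1)) by nra.
  assert (0 < (1-t)*(N*S-1) + t*(qy-1)) by (destruct (Rle_dec t 0); nra).
  assert (Hz : N*S + t*(qy - N*S) > 1) by nra.
  assert ((N*S + t*(qy - N*S) - 0)^2 > 1) by nra.
  assert ((-(N*C) + t*(qx - -(N*C)) - N)^2 >= 0) by (apply Rle_ge, pow2_ge_0).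
  lra.
Qed.

Lemma sh_x qx qy t : 0 <= t <= 1 -> 0 <= qy -> (qx - N)^2 + (qy - 0)^2 > 1 ->
  (-(N*C) + t*(qx - -(N*C)) - N)^2 + (N*S + t*(qy - N*S) - 0)^2 <= 1 -> N < qx.
Proof.
  intros Ht Hy Hq Hd. pose proof (sh_y qx qy t Ht Hd) as Hy1.
  destruct (Rlt_dec N qx) as [|Hx]; [assumption|]. exfalso. apply Rnot_lt_le in Hx.
  destruct (Rlt_dec qx (-(N*C))) as [Hl|Hl].
  - assert (t*(qx - -(N*C)) <= 0) by nra.
    assert (-(N*C) + t*(qx - -(N*C)) - N < -1) by nra.
    assert ((N*S + t*(qy - N*S) - 0)^2 >= 0) by (apply Rle_ge, pow2_ge_0). nra.
  - apply Rnot_lt_le in Hl. set (a := qx - N). set (Dx := -(N*C) - qx). set (b := qy). set (Dy := N*S - qy).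
    set (l := 1 - t).
    assert (E1 : -(N*C) + t*(qx - -(N*C)) - N = a + l*Dx) by (unfold a, l, Dx; ring).
    assert (E2 : N*S + t*(qy - N*S) - 0 = b + l*Dy) by (unfold b, l, Dy; ring).
    rewrite E1, E2 in Hd.
    assert (a <= 0) by (unfold a; lra). assert (Dx <= 0) by (unfold Dx; lra).
    assert (0 <= Dy) by (unfold Dy; lra). assert (0 <= l) by (unfold l; lra).
    assert (l*Dx <= 0) by nra. assert (0 <= l*Dy) by nra.
    assert ((a + l*Dx)^2 >= a^2) by nra.
    assert ((b + l*Dy)^2 >= b^2) by (unfold b in *; nra).
    unfold a, b in *. nra.
Qed.

Lemma sh_G qx qy t : 0 <= t <= 1 ->
  (-(N*C) + t*(qx - -(N*C)) - N)^2 + (N*S + t*(qy - N*S) - 0)^2 <= 1 ->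
  (qy - N*S)*(N+1+N*C) + (N*S-1)*(qx + N*C) <= 0.
Proof.
  intros Ht Hd.
  set (zx := -(N*C) + t*(qx - -(N*C))). set (zy := N*S + t*(qy - N*S)).
  fold zx zy in Hd.
  pose proof (pow2_ge_0 (zx - N)). pose proof (pow2_ge_0 (zy - 0)).
  assert (Hzy : zy <= 1) by nra.
  assert (Hzx : zx <= N + 1) by nra.
  assert (0 <= N*C) by nra.
  assert (0 <= (1 - zy)*(N+1+N*C)) by (apply Rmult_le_pos; lra).
  assert (0 <= (N*S-1)*(N+1-zx)) by (apply Rmult_le_pos; lra).
  assert (HG : (zy - N*S)*(N+1+N*C) + (N*S-1)*(zx + N*C) <= 0) by lra.
  assert (E : (zy - N*S)*(N+1+N*C) + (N*S-1)*(zx + N*C) =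
              t * ((qy - N*S)*(N+1+N*C) + (N*S-1)*(qx + N*C))) by (unfold zx, zy; ring).
  assert (Ht0 : 0 < t).
  { destruct (Rle_dec t 0) as [Ht0'|Ht0']; [|lra].
    assert (t = 0) by lra. subst t. exfalso. unfold zx in Hd.
    assert (-(N*C) + 0*(qx - -(N*C)) - N < -1) by nra. nra. }
  rewrite E in HG. nra.
Qed.

Lemma sector_core a b : 0 < C -> a >= C * sqrt (a^2+b^2) ->
  0 <= a /\ C*b <= S*a /\ -(C*b) <= S*a.
Proof.
  intros HC0 H. pose proof (sqrt_pos (a^2+b^2)) as Hr.
  assert (Hr2 : sqrt (a^2+b^2) * sqrt (a^2+b^2) = a^2+b^2) by (apply sqrt_sqrt; nra).
  set (r := sqrt (a^2+b^2)) in *.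
  assert (Ha : 0 <= a) by nra.
  assert (0 <= C*r) by (apply Rmult_le_pos; lra).
  assert (a*a >= C*C*(r*r)) by nra.
  assert (E : S*S = 1 - C*C) by lra.
  assert (C*C*(b*b) <= S*S*(a*a)) by (rewrite E; nra).
  assert (0 <= S*a) by nra.
  split; [exact Ha|]. split; nra.
Qed.

Lemma sector_intro A B U L : 0 < N -> 0 <= A -> C*B <= S*A -> -(C*B) <= S*A ->
  U = A^2 + B^2 -> L = N*A -> L >= sqrt U * N * C.
Proof.
  intros HN0 HA H1 H2 HU HL.
  assert (HC0 : 0 < C) by lra.
  assert (Hq : sqrt U <= A / C).
  { rewrite <- (sqrt_pow2 (A/C)) by (unfold Rdiv; apply Rmult_le_pos; [lra| left; apply Rinv_0_lt_compat; lra]).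
    apply sqrt_le_1_alt. 
    assert (C*C*U <= A*A) by (subst U; nra).
    replace ((A/C)^2) with (A*A/(C*C)) by (field; lra).
    apply (Rmult_le_reg_l (C*C)); [nra|].
    replace (C*C*(A*A/(C*C))) with (A*A) by (field; lra). lra. }
  subst L. 
  assert (sqrt U * N * C <= A / C * N * C).
  { apply Rmult_le_compat_r; [lra|]. apply Rmult_le_compat_r; lra. }
  replace (A / C * N * C) with (N*A) in H by (field; lra). lra.
Qed.

Lemma sector_half c s qx qy : c^2 + s^2 = 1 ->
  (qx - N*c)*(-(N*c)) + (qy - N*s)*(-(N*s)) >=
    sqrt ((qx - N*c)^2 + (qy - N*s)^2) * sqrt ((-(N*c))^2 + (-(N*s))^2) * C ->
  N*S >= qx*(s*C + c*S) - qy*(c*C - s*S) /\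
  N*S >= -qx*(s*C - c*S) + qy*(c*C + s*S).
Proof.
  intros Hcs H.
  assert (Ev : (-(N*c))^2 + (-(N*s))^2 = N^2).
  { transitivity (N^2 * (c^2+s^2)); [ring|]. rewrite Hcs. ring. }
  rewrite Ev, sqrt_pow2 in H by lra.
  set (a := N - (qx*c + qy*s)). set (b := -qx*s + qy*c).
  assert (Eu : (qx - N*c)^2 + (qy - N*s)^2 = a^2 + b^2).
  { unfold a, b.
    assert (E2 : (qx*c + qy*s)^2 + (-qx*s+qy*c)^2 = (qx^2+qy^2)*(c^2+s^2)) by ring.
    rewrite Hcs in E2.
    transitivity (N^2*(c^2+s^2) - 2*N*(qx*c+qy*s) + (qx^2+qy^2)); [ring|].
    rewrite Hcs. lra. }
  assert (EL : (qx - N*c)*(-(N*c)) + (qy - N*s)*(-(N*s)) = N*a).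
  { unfold a. transitivity (N^2*(c^2+s^2) - N*(qx*c+qy*s)); [ring|]. rewrite Hcs. ring. }
  rewrite Eu, EL in H.
  assert (Ha : a >= C * sqrt (a^2+b^2)).
  { pose proof (sqrt_pos (a^2+b^2)). 
    apply Rle_ge. apply (Rmult_le_reg_l N); [lra|]. lra. }
  destruct (sector_core a b ltac:(lra) Ha) as [Ha0 [H1 H2]].
  unfold a, b in *. split; nra.
Qed.

End Geo.

Lemma basics n m : n = (2*m+1)%nat -> (1 <= m)%nat ->
  INR n = 2 * INR m + 1 /\ 1 <= INR m /\ 3 <= INR n /\ 0 < PI / INR n /\ INR n * (PI / INR n) = PI.
Proof.
  intros Hn Hm. pose proof (INR_n n m Hn) as HN.
  assert (1 <= INR m) by (apply (le_INR 1 m) in Hm; simpl in Hm; lra).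
  assert (3 <= INR n) by lra.
  destruct (h_bounds (INR n)) as [Hh0 [_ Hh2]]; [lra|]. repeat split; lra.
Qed.

Ltac nat2R H := apply le_INR in H; rewrite ?plus_INR, ?mult_INR in H; simpl INR in H.

Lemma rng_up n m j : n = (2*m+1)%nat -> (1 <= m)%nat -> (1 <= j)%nat -> (j <= m)%nat ->
  sin (PI/INR n) <= sin (2*INR j*(PI/INR n)).
Proof.
  intros Hn Hm H1 H2. destruct (basics n m Hn Hm) as [HN [Hm1 [HN3 [Hh HNh]]]].
  nat2R H1. nat2R H2. set (h := PI / INR n) in *. pose proof PI_RGT_0.
  apply sin_ge_interval; nra.
Qed.

Lemma rng_up2 n m j : n = (2*m+1)%nat -> (1 <= m)%nat -> (1 <= j)%nat -> (j+1 <= m)%nat ->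
  2 * sin (PI/INR n) * cos (PI/INR n) <= sin (2*INR j*(PI/INR n)).
Proof.
  intros Hn Hm H1 H2. destruct (basics n m Hn Hm) as [HN [Hm1 [HN3 [Hh HNh]]]].
  nat2R H1. nat2R H2. set (h := PI / INR n) in *. pose proof PI_RGT_0.
  rewrite <- sin_2a. apply sin_ge_interval; nra.
Qed.

Lemma rng_low n m j : n = (2*m+1)%nat -> (1 <= m)%nat -> (m+1 <= j)%nat -> (j <= 2*m)%nat ->
  sin (2*INR j*(PI/INR n)) <= - sin (PI/INR n).
Proof.
  intros Hn Hm H1 H2. destruct (basics n m Hn Hm) as [HN [Hm1 [HN3 [Hh HNh]]]].
  nat2R H1. nat2R H2. set (h := PI / INR n) in *. pose proof PI_RGT_0.
  apply sin_le_interval; nra.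
Qed.

Lemma rng_low2 n m j : n = (2*m+1)%nat -> (1 <= m)%nat -> (m+2 <= j)%nat -> (j <= 2*m)%nat ->
  sin (2*INR j*(PI/INR n)) <= - (2 * sin (PI/INR n) * cos (PI/INR n)).
Proof.
  intros Hn Hm H1 H2. destruct (basics n m Hn Hm) as [HN [Hm1 [HN3 [Hh HNh]]]].
  nat2R H1. nat2R H2. set (h := PI / INR n) in *. pose proof PI_RGT_0.
  rewrite <- sin_2a. apply sin_le_interval; nra.
Qed.

Lemma rng_sec_up n m k : n = (2*m+1)%nat -> (1 <= m)%nat -> (1 <= k)%nat -> (k+1 <= m)%nat ->
  2 * sin (PI/INR n) * cos (PI/INR n) <= sin (2*INR k*(PI/INR n) + PI/INR n).
Proof.
  intros Hn Hm H1 H2. destruct (basics n m Hn Hm) as [HN [Hm1 [HN3 [Hh HNh]]]].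
  nat2R H1. nat2R H2. set (h := PI / INR n) in *. pose proof PI_RGT_0.
  rewrite <- sin_2a. apply sin_ge_interval; nra.
Qed.

Lemma rng_sec_low n m k : n = (2*m+1)%nat -> (1 <= m)%nat -> (m+2 <= k)%nat -> (k <= 2*m)%nat ->
  sin (2*INR k*(PI/INR n) - PI/INR n) <= - (2 * sin (PI/INR n) * cos (PI/INR n)).
Proof.
  intros Hn Hm H1 H2. destruct (basics n m Hn Hm) as [HN [Hm1 [HN3 [Hh HNh]]]].
  nat2R H1. nat2R H2. set (h := PI / INR n) in *. pose proof PI_RGT_0.
  rewrite <- sin_2a. apply sin_le_interval; nra.
Qed.

Lemma region_facts n m q : n = (2*m+1)%nat -> (1 <= m)%nat -> tangent_region n m q ->
  INR n < fst q /\ -1 <= snd q <= 1 /\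
  (snd q - INR n * sin (PI/INR n))*(INR n+1+INR n*cos (PI/INR n)) +
    (INR n * sin (PI/INR n)-1)*(fst q + INR n*cos (PI/INR n)) <= 0 /\
  (- snd q - INR n * sin (PI/INR n))*(INR n+1+INR n*cos (PI/INR n)) +
    (INR n * sin (PI/INR n)-1)*(fst q + INR n*cos (PI/INR n)) <= 0.
Proof.
  intros Hn Hm [Hout [H1 H2]].
  destruct (basics n m Hn Hm) as [HN [Hm1 [HN3 [Hh HNh]]]].
  destruct (consts (INR n) HN3) as [HC [HS0 [HS1 [HSC HNS]]]].
  assert (Hq0 : (fst q - INR n)^2 + (snd q - 0)^2 > 1).
  { assert (Hn0 : (0 < n)%nat) by lia. specialize (Hout 0%nat Hn0).
    unfold in_disk in Hout. rewrite center_0 in Hout. cbn [fst snd] in Hout. lra. }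
  destruct H1 as [t1 [Ht1 Hd1]]. destruct H2 as [t2 [Ht2 Hd2]].
  unfold in_disk in Hd1, Hd2. rewrite (center_m n m Hn), center_0 in Hd1.
  rewrite (center_m1 n m Hn), center_0 in Hd2. cbn [fst snd] in Hd1, Hd2.
  set (N := INR n) in *. set (C := cos (PI / N)) in *. set (S := sin (PI/N)) in *.
  clearbody N C S.
  set (qx := fst q) in *. set (qy := snd q) in *. clearbody qx qy.
  assert (Hd2' : (-(N*C) + t2*(qx - -(N*C)) - N)^2 + (N*S + t2*(-qy - N*S) - 0)^2 <= 1).
  { eapply Rle_trans; [|exact Hd2]. right. ring. }
  assert (Hq0' : (qx - N)^2 + (-qy - 0)^2 > 1).
  { replace ((-qy - 0)^2) with ((qy-0)^2) by ring. exact Hq0. }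
  pose proof (sh_y N C S HS0 HS1 HSC HNS qx qy t1 Ht1 Hd1).
  pose proof (sh_y N C S HS0 HS1 HSC HNS qx (-qy) t2 Ht2 Hd2').
  pose proof (sh_G N C S HN3 HC HS0 HS1 HSC HNS qx qy t1 Ht1 Hd1).
  pose proof (sh_G N C S HN3 HC HS0 HS1 HSC HNS qx (-qy) t2 Ht2 Hd2').
  split; [|split; [lra|split; assumption]].
  destruct (Rle_dec 0 qy).
  - exact (sh_x N C S HN3 HC HS0 HS1 HSC HNS qx qy t1 Ht1 r Hq0 Hd1).
  - refine (sh_x N C S HN3 HC HS0 HS1 HSC HNS qx (-qy) t2 Ht2 _ Hq0' Hd2'). lra.
Qed.

Lemma partA n m : n = (2*m+1)%nat -> (1 <= m)%nat -> exists q, tangent_region n m q.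
Proof.
  intros Hn Hm. destruct (basics n m Hn Hm) as [HN [Hm1 [HN3 [Hh HNh]]]].
  destruct (consts (INR n) HN3) as [HC [HS0 [HS1 [HSC HNS]]]].
  exists (INR n + 3/2, 0). split; [|split].
  - intros k Hk Hd. unfold in_disk in Hd. rewrite center_eq in Hd. cbn [fst snd] in Hd.
    set (th := 2 * INR k * (PI / INR n)) in *.
    pose proof (COS_bound th). pose proof (sin2_cos2 th) as E. unfold Rsqr in E.
    set (N := INR n) in *. clearbody N.
    assert (E2 : N^2 * (sin th ^2 + cos th^2) = N^2) by (replace (sin th ^2 + cos th^2) with 1 by lra; ring).
    assert (0 <= (N + 3/2) * N * (1 - cos th)) by (apply Rmult_le_pos; nra).
    nra.
  - exists (INR n * (1 + cos (PI/INR n)) / (INR n + 3/2 + INR n * cos (PI/INR n))).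
    unfold in_disk. rewrite (center_m n m Hn), center_0. cbn [fst snd].
    set (N := INR n) in *. set (C := cos (PI/N)) in *. set (S := sin (PI/N)) in *.
    clearbody N C S.
    assert (HD : 0 < N + 3/2 + N*C) by nra.
    split.
    + split.
      * apply Rmult_le_pos; [nra|]. left. apply Rinv_0_lt_compat. lra.
      * apply (Rmult_le_reg_r (N + 3/2 + N*C)); [lra|]. unfold Rdiv.
        rewrite Rmult_assoc, Rinv_l by lra. lra.
    + replace (- (N * C) + N * (1 + C) / (N + 3 / 2 + N * C) * (N + 3 / 2 - - (N * C)) - N)
        with 0 by (field; lra).
      replace (N * S + N * (1 + C) / (N + 3 / 2 + N * C) * (0 - N * S) - 0)
        with (N * S * (3/2) / (N + 3/2 + N*C)) by (field; lra).
      set (x := N * S * (3/2) / (N + 3/2 + N*C)).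
      assert (0 <= x) by (unfold x; apply Rmult_le_pos; [nra| left; apply Rinv_0_lt_compat; lra]).
      assert (x <= 1).
      { unfold x. apply (Rmult_le_reg_r (N + 3/2 + N*C)); [lra|]. unfold Rdiv.
        rewrite Rmult_assoc, Rinv_l by lra. nra. }
      nra.
  - exists (INR n * (1 + cos (PI/INR n)) / (INR n + 3/2 + INR n * cos (PI/INR n))).
    unfold in_disk. rewrite (center_m1 n m Hn), center_0. cbn [fst snd].
    set (N := INR n) in *. set (C := cos (PI/N)) in *. set (S := sin (PI/N)) in *.
    clearbody N C S.
    assert (HD : 0 < N + 3/2 + N*C) by nra.
    split.
    + split.
      * apply Rmult_le_pos; [nra|]. left. apply Rinv_0_lt_compat. lra.
      * apply (Rmult_le_reg_r (N + 3/2 + N*C)); [lra|]. unfold Rdiv.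
        rewrite Rmult_assoc, Rinv_l by lra. lra.
    + replace (- (N * C) + N * (1 + C) / (N + 3 / 2 + N * C) * (N + 3 / 2 - - (N * C)) - N)
        with 0 by (field; lra).
      replace (- (N * S) + N * (1 + C) / (N + 3 / 2 + N * C) * (0 - - (N * S)) - 0)
        with (- (N * S * (3/2) / (N + 3/2 + N*C))) by (field; lra).
      set (x := N * S * (3/2) / (N + 3/2 + N*C)).
      assert (0 <= x) by (unfold x; apply Rmult_le_pos; [nra| left; apply Rinv_0_lt_compat; lra]).
      assert (x <= 1).
      { unfold x. apply (Rmult_le_reg_r (N + 3/2 + N*C)); [lra|]. unfold Rdiv.
        rewrite Rmult_assoc, Rinv_l by lra. nra. }
      nra.
Qed.

Lemma partB n m : n = (2*m+1)%nat -> (1 <= m)%nat ->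
  exists B, forall q, tangent_region n m q -> fst q ^ 2 + snd q ^ 2 <= B.
Proof.
  intros Hn Hm. destruct (basics n m Hn Hm) as [HN [Hm1 [HN3 [Hh HNh]]]].
  destruct (consts (INR n) HN3) as [HC [HS0 [HS1 [HSC HNS]]]].
  set (N := INR n) in *. set (C := cos (PI/N)) in *. set (S := sin (PI/N)) in *.
  set (X := N*S*(N+1+N*C)/(N*S-1)).
  exists (X^2 + 1). intros q Hq.
  destruct (region_facts n m q Hn Hm Hq) as [Hx [Hy [G1 G2]]].
  fold N C S in Hx, Hy, G1, G2.
  assert (HX : fst q <= X).
  { assert (0 <= (N*S-1)*(N*C)) by (apply Rmult_le_pos; nra).
    assert (H1 : (N*S-1)*fst q <= N*S*(N+1+N*C)) by lra.
    unfold X, Rdiv. replace (fst q) with ((N*S-1)*fst q * /(N*S-1)) by (field; lra).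
    apply Rmult_le_compat_r; [left; apply Rinv_0_lt_compat; lra| exact H1]. }
  assert (fst q ^2 <= X^2) by nra.
  nra.
Qed.

Lemma partC n m : n = (2*m+1)%nat -> (1 <= m)%nat ->
  forall q, tangent_region n m q -> dark n q.
Proof.
  intros Hn Hm q Hq. destruct (basics n m Hn Hm) as [HN [Hm1 [HN3 [Hh HNh]]]].
  destruct (consts (INR n) HN3) as [HC [HS0 [HS1 [HSC HNS]]]].
  destruct (region_facts n m q Hn Hm Hq) as [Hx [Hy _]].
  split; [exact (proj1 Hq)|]. intros k Hk [Hsec Hblock].
  destruct (Nat.eq_dec k m) as [->|Hkm].
  { apply (Hblock 0%nat); [lia|lia|exact (proj1 (proj2 Hq))]. }
  destruct (Nat.eq_dec k (m+1)) as [->|Hkm1].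
  { apply (Hblock 0%nat); [lia|lia|exact (proj2 (proj2 Hq))]. }
  destruct (Nat.eq_dec k 0) as [->|Hk0].
  { unfold in_sector in Hsec. rewrite center_0 in Hsec. cbv zeta in Hsec. cbn [fst snd] in Hsec.
    pose proof (sqrt_pos ((fst q - INR n) ^ 2 + (snd q - 0) ^ 2)).
    pose proof (sqrt_pos ((- INR n) ^ 2 + (- 0) ^ 2)).
    assert (0 <= sqrt ((fst q - INR n) ^ 2 + (snd q - 0) ^ 2) * sqrt ((- INR n) ^ 2 + (- 0) ^ 2)
                 * cos (PI / INR n)) by (apply Rmult_le_pos; [apply Rmult_le_pos|]; lra).
    nra. }
  unfold in_sector in Hsec. rewrite center_eq in Hsec. cbv zeta in Hsec. cbn [fst snd] in Hsec.
  set (th := 2 * INR k * (PI / INR n)) in *.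
  pose proof (sin2_cos2 th) as E. unfold Rsqr in E.
  assert (Ecs : cos th ^ 2 + sin th ^2 = 1) by lra.
  pose proof (sector_half (INR n) (cos (PI/INR n)) (sin (PI/INR n)) HN3 HC HS0 HSC
                (cos th) (sin th) (fst q) (snd q) Ecs Hsec) as [H1 H2].
  set (N := INR n) in *. set (h := PI / N) in *.
  assert (Hm2 : (2 <= m)%nat) by lia.
  assert (HN5 : 5 <= N) by (apply (le_INR 2 m) in Hm2; simpl in Hm2; lra).
  pose proof (consts5 N HN5) as H5. fold h in H5.
  assert (Hqy : forall z, -1 <= z <= 1 -> snd q * z <= 1 /\ - (snd q * z) <= 1) by (intros; split; nra).
  destruct (Nat.le_gt_cases k m) as [Hle|Hgt].
  -
    pose proof (rng_sec_up n m k Hn Hm ltac:(lia) ltac:(lia)) as Hs. fold N h th in Hs.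
    rewrite sin_plus in Hs. pose proof (COS_bound (th + h)) as Hcb. rewrite cos_plus in Hcb.
    destruct (Hqy _ Hcb) as [Hq1 Hq2].
    assert (0 < sin h * cos h) by (apply Rmult_lt_0_compat; lra).
    assert (fst q * (sin th * cos h + cos th * sin h) >= N * (2 * sin h * cos h)) by nra.
    nra.
  - pose proof (rng_sec_low n m k Hn Hm ltac:(lia) ltac:(lia)) as Hs. fold N h th in Hs.
    rewrite sin_minus in Hs. pose proof (COS_bound (th - h)) as Hcb. rewrite cos_minus in Hcb.
    destruct (Hqy _ Hcb) as [Hq1 Hq2].
    assert (0 < sin h * cos h) by (apply Rmult_lt_0_compat; lra).
    assert (- fst q * (sin th * cos h - cos th * sin h) >= N * (2 * sin h * cos h)) by nra.
    nra.
Qed.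

Lemma partD n m : n = (2*m+1)%nat -> (1 <= m)%nat ->
  exists eps, eps > 0 /\
     forall q, outside_all n q -> ~ tangent_region n m q ->
       (exists p, tangent_region n m p /\
          (fst q - fst p) ^ 2 + (snd q - snd p) ^ 2 < eps ^ 2) ->
       ~ dark n q.
Proof.
  intros Hn Hm. destruct (basics n m Hn Hm) as [HN [Hm1 [HN3 [Hh HNh]]]].
  destruct (consts (INR n) HN3) as [HC [HS0 [HS1 [HSC HNS]]]].
  exists (1/4). split; [lra|].
  intros q Hout Hnot [p [Hp Hdist]] [_ Hnolit].
  destruct (region_facts n m p Hn Hm Hp) as [Hpx [Hpy _]].
  assert (Hdx : (fst q - fst p)^2 < 1/16) by (pose proof (pow2_ge_0 (snd q - snd p)); nra).
  assert (Hdy : (snd q - snd p)^2 < 1/16) by (pose proof (pow2_ge_0 (fst q - fst p)); nra).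
  assert (Hqx : INR n - 1/4 < fst q) by nra.
  assert (Hqy : -5/4 < snd q < 5/4) by (split; nra).
  clear Hdx Hdy Hdist.
  destruct (classic (seg_meets n 0 (center n m) q)) as [Hs1|Hs1];
  [destruct (classic (seg_meets n 0 (center n (m+1)) q)) as [Hs2|Hs2]|].
  - apply Hnot. split; [exact Hout| split; assumption].
  -
    apply (Hnolit (m+1)%nat); [lia|]. split.
    + unfold in_sector. rewrite (center_m1 n m Hn). cbv zeta. cbn [fst snd].
      set (N := INR n) in *. set (C := cos (PI/N)) in *. set (S := sin (PI/N)) in *.
      clearbody N C S. set (qx := fst q) in *. set (qy := snd q) in *. clearbody qx qy.
      assert (Ev : (- - (N * C)) ^ 2 + (- - (N * S)) ^ 2 = N^2).
      { transitivity (N^2 * (S^2 + C^2)); [ring|]. rewrite HSC. ring. }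
      rewrite Ev, sqrt_pow2 by lra.
      apply (sector_intro N C S HN3 HC HSC (N + C*qx + S*qy) (S*qx - C*qy)); [lra| | | | |].
      * assert (0 <= C*qx) by nra. assert (0 <= S*qy + N*S) by nra. nra.
      * assert (E1 : S*(N + C*qx + S*qy) - C*(S*qx - C*qy) = N*S + qy*(S^2+C^2)) by ring.
        rewrite HSC in E1. nra.
      * assert (E1 : S*(N + C*qx + S*qy) + C*(S*qx - C*qy) = N*S + 2*S*C*qx + qy*(S^2-C^2)) by ring.
        assert (0 <= S*C*qx) by (apply Rmult_le_pos; [nra|lra]).
        assert (-1 <= S^2 - C^2 <= 1) by nra.
        assert (qy*(S^2-C^2) >= -(5/4)) by nra. nra.
      * assert (e1 : N^2*(S^2+C^2) = N^2) by (rewrite HSC; ring).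
        assert (e2 : (qx^2+qy^2)*(S^2+C^2) = qx^2+qy^2) by (rewrite HSC; ring).
        lra.
      * transitivity (N*(C*qx+S*qy) + N^2*(S^2+C^2)); [ring|]. rewrite HSC. ring.
    + intros j Hj Hjk Hseg.
      destruct (Nat.eq_dec j 0) as [->|Hj0]; [exact (Hs2 Hseg)|].
      destruct Hseg as [t [Ht Hd]]. unfold in_disk in Hd.
      rewrite (center_m1 n m Hn), center_eq in Hd. cbn [fst snd] in Hd.
      set (th := 2 * INR j * (PI / INR n)) in *.
      destruct (Nat.le_gt_cases j m) as [Hle|Hgt].
      * pose proof (rng_up n m j Hn Hm ltac:(lia) Hle) as Hs. fold th in Hs.
        set (N := INR n) in *. set (C := cos (PI/N)) in *. set (S := sin (PI/N)) in *.
        clearbody N C S.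
        pose proof (pow2_ge_0 (- (N * C) + t * (fst q - - (N * C)) - N * cos th)).
        assert (Hz : - (N * S) + t * (snd q - - (N * S)) <= 5/4) by nra.
        assert (N * sin th - (- (N * S) + t * (snd q - - (N * S))) > 1) by nra.
        nra.
      * assert (Hm2 : (2 <= m)%nat) by lia.
        pose proof (rng_low2 n m j Hn Hm ltac:(lia) ltac:(lia)) as Hs. fold th in Hs.
        assert (HN5 : 5 <= INR n) by (apply (le_INR 2 m) in Hm2; simpl in Hm2; lra).
        pose proof (consts5 (INR n) HN5) as H5.
        set (N := INR n) in *. set (C := cos (PI/N)) in *. set (S := sin (PI/N)) in *.
        clearbody N C S.
        pose proof (pow2_ge_0 (- (N * C) + t * (fst q - - (N * C)) - N * cos th)).
        assert (Hz : - (N * S) <= - (N * S) + t * (snd q - - (N * S))) by nra.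
        assert ((- (N * S) + t * (snd q - - (N * S))) - N * sin th > 1) by nra.
        nra.
  -
    apply (Hnolit m); [lia|]. split.
    + unfold in_sector. rewrite (center_m n m Hn). cbv zeta. cbn [fst snd].
      set (N := INR n) in *. set (C := cos (PI/N)) in *. set (S := sin (PI/N)) in *.
      clearbody N C S. set (qx := fst q) in *. set (qy := snd q) in *. clearbody qx qy.
      assert (Ev : (- - (N * C)) ^ 2 + (- (N * S)) ^ 2 = N^2).
      { transitivity (N^2 * (S^2 + C^2)); [ring|]. rewrite HSC. ring. }
      rewrite Ev, sqrt_pow2 by lra.
      apply (sector_intro N C S HN3 HC HSC (N + C*qx - S*qy) (S*qx + C*qy)); [lra| | | | |].
      * assert (0 <= C*qx) by nra. assert (0 <= N*S - S*qy) by nra. nra.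
      * assert (E1 : S*(N + C*qx - S*qy) - C*(S*qx + C*qy) = N*S - qy*(S^2+C^2)) by ring.
        rewrite HSC in E1. nra.
      * assert (E1 : S*(N + C*qx - S*qy) + C*(S*qx + C*qy) = N*S + 2*S*C*qx + qy*(C^2-S^2)) by ring.
        assert (0 <= S*C*qx) by (apply Rmult_le_pos; [nra|lra]).
        assert (-1 <= C^2 - S^2 <= 1) by nra.
        assert (qy*(C^2-S^2) >= -(5/4)) by nra. nra.
      * assert (e1 : N^2*(S^2+C^2) = N^2) by (rewrite HSC; ring).
        assert (e2 : (qx^2+qy^2)*(S^2+C^2) = qx^2+qy^2) by (rewrite HSC; ring).
        lra.
      * transitivity (N*(C*qx-S*qy) + N^2*(S^2+C^2)); [ring|]. rewrite HSC. ring.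
    + intros j Hj Hjk Hseg.
      destruct (Nat.eq_dec j 0) as [->|Hj0]; [exact (Hs1 Hseg)|].
      destruct Hseg as [t [Ht Hd]]. unfold in_disk in Hd.
      rewrite (center_m n m Hn), center_eq in Hd. cbn [fst snd] in Hd.
      set (th := 2 * INR j * (PI / INR n)) in *.
      destruct (Nat.le_gt_cases j m) as [Hle|Hgt].
      * assert (Hm2 : (2 <= m)%nat) by lia.
        pose proof (rng_up2 n m j Hn Hm ltac:(lia) ltac:(lia)) as Hs. fold th in Hs.
        assert (HN5 : 5 <= INR n) by (apply (le_INR 2 m) in Hm2; simpl in Hm2; lra).
        pose proof (consts5 (INR n) HN5) as H5.
        set (N := INR n) in *. set (C := cos (PI/N)) in *. set (S := sin (PI/N)) in *.
        clearbody N C S.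
        pose proof (pow2_ge_0 (- (N * C) + t * (fst q - - (N * C)) - N * cos th)).
        assert (Hz : N * S + t * (snd q - N * S) <= N * S) by nra.
        assert (N * sin th - (N * S + t * (snd q - N * S)) > 1) by nra.
        nra.
      * pose proof (rng_low n m j Hn Hm ltac:(lia) ltac:(lia)) as Hs. fold th in Hs.
        set (N := INR n) in *. set (C := cos (PI/N)) in *. set (S := sin (PI/N)) in *.
        clearbody N C S.
        pose proof (pow2_ge_0 (- (N * C) + t * (fst q - - (N * C)) - N * cos th)).
        assert (Hz : -5/4 <= N * S + t * (snd q - N * S)) by nra.
        assert ((N * S + t * (snd q - N * S)) - N * sin th > 1) by nra.
        nra.
Qed.

Theorem mainTheorem2 (n m : nat) (Hn : n = (2 * m + 1)%nat) (Hm : (1 <= m)%nat) :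
  (* the region is nonempty and finite (bounded) *)
  (exists q, tangent_region n m q) /\
  (exists B, forall q, tangent_region n m q -> fst q ^ 2 + snd q ^ 2 <= B) /\
  (* every point of the region is dark *)
  (forall q, tangent_region n m q -> dark n q) /\
  (* the region is exactly the dark region there: all points outside the
     disks, near the region but not in it, are lit (so no other lighthouse
     contributes to its boundary) *)
  (exists eps, eps > 0 /\
     forall q, outside_all n q -> ~ tangent_region n m q ->
       (exists p, tangent_region n m p /\
          (fst q - fst p) ^ 2 + (snd q - snd p) ^ 2 < eps ^ 2) ->
       ~ dark n q).
Proof.
  split; [exact (partA n m Hn Hm)|].
  split; [exact (partB n m Hn Hm)|].
  split; [exact (partC n m Hn Hm)|].
  exact (partD n m Hn Hm).
Qed.
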